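(* Consider the downlink clustered NOMA model and the problems $\mathcal{P}_1'$ and $\mathcal{P}_2'$ with Lagrangians $f$ and $g$ described in the context. Fix a precoder $\mathbf{P}^\star$, and choose the weights in $\mathcal{P}_2'$ as $$b_{k,i\to l}=\frac{1}{\varepsilon^{mmse}_{k,i\to l}}\quad\text{(evaluated at } \mathbf{P}^\star\text{)},\qquad 1\le l\le i\le L,\ 1\le k\le K,$$ and the thresholds as $\xi^{th}_{k,l}=1-R^{th}_{k,l}$. Then $\xi^{mmse}_{k,i\to l}=1-R_{k,i\to l}$ at $\mathbf{P}^\star$ for all $k$ and all $1\le l\le i\le L$. Moreover, $(\mathbf{P}^\star,\{R^\star_{k,l}\},c^\star,\mu,\kappa,\psi,\lambda)$ satisfies the KKT conditions of $\mathcal{P}_1'$ if and only if $(\mathbf{P}^\star,\{\xi^\star_{k,l}=1-R^\star_{k,l}\},\bar c^\star=L-c^\star,\bar\mu=\mu,\bar\kappa=\kappa,\bar\psi=\psi,\bar\lambda=\lambda)$ satisfies the KKT conditions of $\mathcal{P}_2'$. Consequently, the optimal precoders of the max-min fair sum rate problem $\mathcal{P}_1'$ and of the min-max fair weighted MMSE problem $\mathcal{P}_2'$ coincide at the optimal solution point.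
   Context: A base station with $M$ antennas serves $K$ clusters of $L$ single-antenna users each. User $i$ of cluster $k$ has channel row vector $\mathbf{h}_{k,i}\in\mathbb{C}^{1\times M}$. Power fractions satisfy $\alpha_{k,l}>0$, $\sum_{l=1}^L\alpha_{k,l}=1$. The precoder is $\mathbf{P}=[\mathbf{p}_1,\dots,\mathbf{p}_K]\in\mathbb{C}^{M\times K}$ with total power budget $E_{tx}>0$. For $1\le l\le i\le L$ define $r_{k,i\to l}=\sum_{j=l+1}^{L}\alpha_{k,j}|\mathbf{h}_{k,i}\mathbf{p}_k|^2+\sum_{t\ne k}|\mathbf{h}_{k,i}\mathbf{p}_t|^2+1$, $R_{k,i\to l}=\log\big(1+\alpha_{k,l}|\mathbf{h}_{k,i}\mathbf{p}_k|^2 r_{k,i\to l}^{-1}\big)$, $\varepsilon^{mmse}_{k,i\to l}=\big(\alpha_{k,l}^{-1}+|\mathbf{h}_{k,i}\mathbf{p}_k|^2 r_{k,i\to l}^{-1}\big)^{-1}$ (so that $R_{k,i\to l}=\log(\alpha_{k,l}/\varepsilon^{mmse}_{k,i\to l})$), and, for given weights $b_{k,i\to l}>0$, $\xi^{mmse}_{k,i\to l}=b_{k,i\to l}\varepsilon^{mmse}_{k,i\to l}-\log(\alpha_{k,l}b_{k,i\to l})$. Problem $\mathcal{P}_1'$: maximize $c$ over $\mathbf{P}$, $\{R_{k,l}\}$, $c$ subject to $c\le\sum_{l=1}^L R_{k,l}$ for all $k$; $R_{k,l}\le R_{k,i\to l}$ for all $k$ and $l\le i\le L$; $R^{th}_{k,l}\le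 R_{k,l}$ for all $k,l$ (given thresholds $R^{th}_{k,l}\ge0$); $\mathrm{Tr}(\mathbf{P}\mathbf{P}^H)\le E_{tx}$. Its Lagrangian is $f=-c+\sum_k\mu_k c-\sum_{k,l}\mu_k R_{k,l}+\sum_{k,l}\kappa_{k,l}(R^{th}_{k,l}-R_{k,l})+\lambda(\mathrm{Tr}(\mathbf{P}\mathbf{P}^H)-E_{tx})+\sum_{k}\sum_{l=1}^L\sum_{i=l}^L\psi_{k,i\to l}(R_{k,l}-R_{k,i\to l})$. Problem $\mathcal{P}_2'$ (weights $b_{k,i\to l}>0$ treated as fixed constants): minimize $\bar c$ over $\mathbf{P}$, $\{\xi_{k,l}\}$, $\bar c$ subject to $\sum_{l=1}^L\xi_{k,l}\le\bar c$ for all $k$; $\xi^{mmse}_{k,i\to l}\le\xi_{k,l}$ for all $k$ and $l\le i\le L$; $\xi_{k,l}\le\xi^{th}_{k,l}$ for all $k,l$; $\mathrm{Tr}(\mathbf{P}\mathbf{P}^H)\le E_{tx}$. Its Lagrangian is $g=\bar c-\sum_k\bar\mu_k\bar c+\sum_{k,l}\bar\mu_k\xi_{k,l}+\sum_{k,l}\bar\kappa_{k,l}(\xi_{k,l}-\xi^{th}_{k,l})+\bar\lambda(\mathrm{Tr}(\mathbf{P}\mathbf{P}^H)-E_{tx})+\sum_k\sum_{l=1}^L\sum_{i=l}^L\bar\psi_{k,i\to l}(\xi^{mmse}_{k,i\to l}-\xi_{k,l})$. KKT conditions: stationarity of the Lagrangian with respect to each $\mathbf{p}_k$ (complex gradient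 taken with respect to $\mathbf{p}_k^*$), with respect to the auxiliary scalar ($c$ or $\bar c$) and with respect to each $R_{k,l}$ (resp. $\xi_{k,l}$); primal feasibility; nonnegativity of all multipliers; and complementary slackness for every constraint. *)

(* Defs.v *)
From Stdlib Require Import Reals Lra Arith Bool.
From Coquelicot Require Import Coquelicot.
Open Scope R_scope.

(* Indices are 0-based: antennas m < M, clusters k < K, users i < L.
   User i of cluster k is "user i+1" of the paper; the ordering l <= i is kept. *)

Fixpoint sumR (n : nat) (f : nat -> R) : R :=
  match n with O => 0 | S n' => sumR n' f + f n' end.
Fixpoint sumC (n : nat) (f : nat -> C) : C :=
  match n with O => RtoC 0 | S n' => Cplus (sumC n' f) (f n') end.

Definition normsq (z : C) : R := (Re z) ^ 2 + (Im z) ^ 2.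

(* channel h k i : row vector, entry m = h k i m;  precoder P m k = (P)_{m,k} *)
Definition Chan := nat -> nat -> nat -> C.
Definition Precoder := nat -> nat -> C.

Definition gain (M : nat) (h : Chan) (P : Precoder) (k i t : nat) : R :=
  normsq (sumC M (fun m => Cmult (h k i m) (P m t))).

Definition rint (M K L : nat) (h : Chan) (alpha : nat -> nat -> R) (P : Precoder)
  (k i l : nat) : R :=
  sumR L (fun j => if Nat.ltb l j then alpha k j else 0) * gain M h P k i k
  + sumR K (fun t => if Nat.eqb t k then 0 else gain M h P k i t) + 1.

Definition rate (M K L : nat) (h : Chan) (alpha : nat -> nat -> R) (P : Precoder)
  (k i l : nat) : R :=
  ln (1 + alpha k l * gain M h P k i k / rint M K L h alpha P k i l).

Definition eps_mmse (M K L : nat) (h : Chan) (alpha : nat -> nat -> R) (P : Precoder)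
  (k i l : nat) : R :=
  / (/ alpha k l + gain M h P k i k / rint M K L h alpha P k i l).

Definition xi_mmse (M K L : nat) (h : Chan) (alpha : nat -> nat -> R)
  (b : nat -> nat -> nat -> R) (P : Precoder) (k i l : nat) : R :=
  b k i l * eps_mmse M K L h alpha P k i l - ln (alpha k l * b k i l).

Definition trPPH (M K : nat) (P : Precoder) : R :=
  sumR M (fun m => sumR K (fun k => normsq (P m k))).

Definition sum_tri (L : nat) (F : nat -> nat -> R) : R :=
  sumR L (fun l => sumR L (fun i => if Nat.leb l i then F i l else 0)).

Definition lagr_f (M K L : nat) (h : Chan) (alpha : nat -> nat -> R) (Etx : R)
  (Rth : nat -> nat -> R)
  (P : Precoder) (Rv : nat -> nat -> R) (c : R)
  (mu : nat -> R) (kappa : nat -> nat -> R) (psi : nat -> nat -> nat -> R)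
  (lambda : R) : R :=
  - c + sumR K (fun k => mu k * c)
  - sumR K (fun k => sumR L (fun l => mu k * Rv k l))
  + sumR K (fun k => sumR L (fun l => kappa k l * (Rth k l - Rv k l)))
  + lambda * (trPPH M K P - Etx)
  + sumR K (fun k => sum_tri L (fun i l =>
        psi k i l * (Rv k l - rate M K L h alpha P k i l))).

Definition lagr_g (M K L : nat) (h : Chan) (alpha : nat -> nat -> R) (Etx : R)
  (b : nat -> nat -> nat -> R) (xith : nat -> nat -> R)
  (P : Precoder) (xi : nat -> nat -> R) (cb : R)
  (mub : nat -> R) (kappab : nat -> nat -> R) (psib : nat -> nat -> nat -> R)
  (lambdab : R) : R :=
  cb - sumR K (fun k => mub k * cb)
  + sumR K (fun k => sumR L (fun l => mub k * xi k l))
  + sumR K (fun k => sumR L (fun l => kappab k l * (xi k l - xith k l)))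
  + lambdab * (trPPH M K P - Etx)
  + sumR K (fun k => sum_tri L (fun i l =>
        psib k i l * (xi_mmse M K L h alpha b P k i l - xi k l))).

Definition pertP (P : Precoder) (m k : nat) (z : C) : Precoder :=
  fun m' k' => if andb (Nat.eqb m' m) (Nat.eqb k' k) then Cplus (P m' k') z else P m' k'.

(* Wirtinger (complex) derivative of a real function F of P w.r.t. conj(P_{m,k}):
   dF/dP*_{mk} = (1/2) (dF/dRe P_{mk} + i dF/dIm P_{mk}).  The gradient
   w.r.t. p_k^* is the vector of these entries, m < M. *)
Definition dconj (F : Precoder -> R) (P : Precoder) (m k : nat) : C :=
  (Derive (fun t => F (pertP P m k (t, 0))) 0 / 2,
   Derive (fun t => F (pertP P m k (0, t))) 0 / 2).

Definition upd2 (X : nat -> nat -> R) (k l : nat) (x : R) : nat -> nat -> R :=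
  fun k' l' => if andb (Nat.eqb k' k) (Nat.eqb l' l) then x else X k' l'.

Definition KKT1 (M K L : nat) (h : Chan) (alpha : nat -> nat -> R) (Etx : R)
  (Rth : nat -> nat -> R)
  (P : Precoder) (Rv : nat -> nat -> R) (c : R)
  (mu : nat -> R) (kappa : nat -> nat -> R) (psi : nat -> nat -> nat -> R)
  (lambda : R) : Prop :=
  let F := fun P' Rv' c' => lagr_f M K L h alpha Etx Rth P' Rv' c' mu kappa psi lambda in
  (forall m k, (m < M)%nat -> (k < K)%nat -> dconj (fun P' => F P' Rv c) P m k = RtoC 0) /\
  Derive (fun c' => F P Rv c') c = 0 /\
  (forall k l, (k < K)%nat -> (l < L)%nat ->
     Derive (fun x => F P (upd2 Rv k l x) c) (Rv k l) = 0) /\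
  (forall k, (k < K)%nat -> c <= sumR L (fun l => Rv k l)) /\
  (forall k i l, (k < K)%nat -> (l <= i)%nat -> (i < L)%nat ->
     Rv k l <= rate M K L h alpha P k i l) /\
  (forall k l, (k < K)%nat -> (l < L)%nat -> Rth k l <= Rv k l) /\
  trPPH M K P <= Etx /\
  (forall k, (k < K)%nat -> 0 <= mu k) /\
  (forall k l, (k < K)%nat -> (l < L)%nat -> 0 <= kappa k l) /\
  (forall k i l, (k < K)%nat -> (l <= i)%nat -> (i < L)%nat -> 0 <= psi k i l) /\
  0 <= lambda /\
  (forall k, (k < K)%nat -> mu k * (c - sumR L (fun l => Rv k l)) = 0) /\
  (forall k i l, (k < K)%nat -> (l <= i)%nat -> (i < L)%nat ->
     psi k i l * (Rv k l - rate M K L h alpha P k i l) = 0) /\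
  (forall k l, (k < K)%nat -> (l < L)%nat -> kappa k l * (Rth k l - Rv k l) = 0) /\
  lambda * (trPPH M K P - Etx) = 0.

Definition KKT2 (M K L : nat) (h : Chan) (alpha : nat -> nat -> R) (Etx : R)
  (b : nat -> nat -> nat -> R) (xith : nat -> nat -> R)
  (P : Precoder) (xi : nat -> nat -> R) (cb : R)
  (mub : nat -> R) (kappab : nat -> nat -> R) (psib : nat -> nat -> nat -> R)
  (lambdab : R) : Prop :=
  let G := fun P' xi' cb' => lagr_g M K L h alpha Etx b xith P' xi' cb' mub kappab psib lambdab in
  (forall m k, (m < M)%nat -> (k < K)%nat -> dconj (fun P' => G P' xi cb) P m k = RtoC 0) /\
  Derive (fun c' => G P xi c') cb = 0 /\
  (forall k l, (k < K)%nat -> (l < L)%nat ->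
     Derive (fun x => G P (upd2 xi k l x) cb) (xi k l) = 0) /\
  (forall k, (k < K)%nat -> sumR L (fun l => xi k l) <= cb) /\
  (forall k i l, (k < K)%nat -> (l <= i)%nat -> (i < L)%nat ->
     xi_mmse M K L h alpha b P k i l <= xi k l) /\
  (forall k l, (k < K)%nat -> (l < L)%nat -> xi k l <= xith k l) /\
  trPPH M K P <= Etx /\
  (forall k, (k < K)%nat -> 0 <= mub k) /\
  (forall k l, (k < K)%nat -> (l < L)%nat -> 0 <= kappab k l) /\
  (forall k i l, (k < K)%nat -> (l <= i)%nat -> (i < L)%nat -> 0 <= psib k i l) /\
  0 <= lambdab /\
  (forall k, (k < K)%nat -> mub k * (sumR L (fun l => xi k l) - cb) = 0) /\
  (forall k i l, (k < K)%nat -> (l <= i)%nat -> (i < L)%nat ->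
     psib k i l * (xi_mmse M K L h alpha b P k i l - xi k l) = 0) /\
  (forall k l, (k < K)%nat -> (l < L)%nat -> kappab k l * (xi k l - xith k l) = 0) /\
  lambdab * (trPPH M K P - Etx) = 0.

(* Main.v *)
Require Import Defs.
From Stdlib Require Import Reals Lra Lia FunctionalExtensionality.
From Coquelicot Require Import Coquelicot.
Open Scope R_scope.


Lemma exd_plus (f g : R -> R) x : ex_derive f x -> ex_derive g x -> ex_derive (fun y => f y + g y) x.
Proof. intros; exact (ex_derive_plus f g x H H0). Qed.
Lemma exd_minus (f g : R -> R) x : ex_derive f x -> ex_derive g x -> ex_derive (fun y => f y - g y) x.
Proof. intros; exact (ex_derive_minus f g x H H0). Qed.
Lemma exd_opp (f : R -> R) x : ex_derive f x -> ex_derive (fun y => - f y) x.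
Proof. intros; exact (ex_derive_opp f x H). Qed.
Lemma exd_const (a x : R) : ex_derive (fun _ => a) x.
Proof. exact (ex_derive_const a x). Qed.
Lemma exd_id (x : R) : ex_derive (fun y => y) x.
Proof. exact (ex_derive_id x). Qed.

Lemma exd_sumR n (F : nat -> R -> R) x :
  (forall j, (j < n)%nat -> ex_derive (F j) x) ->
  ex_derive (fun y => sumR n (fun j => F j y)) x.
Proof.
  induction n; intros H; simpl.
  - apply exd_const.
  - apply exd_plus. apply IHn; intros; apply H; lia. apply H; lia.
Qed.

Ltac exd := repeat match goal with
  | |- ex_derive (fun _ => _ - _) _ => apply exd_minus
  | |- ex_derive (fun _ => _ + _) _ => apply exd_plus
  | |- ex_derive (fun _ => - _) _ => apply exd_opp
  | |- ex_derive (fun _ => _ * _) _ => apply ex_derive_mult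
  | |- ex_derive (fun _ => sumR _ _) _ => apply exd_sumR; intros ? ?
  | |- ex_derive (fun _ => if ?b then _ else _) _ => destruct b
  | |- ex_derive (fun y => y) _ => apply exd_id
  | |- ex_derive Ropp _ => apply (exd_opp (fun y => y)); apply exd_id
  | |- ex_derive (fun _ => ?a) _ => apply exd_const
  end.

Definition exdC (z : R -> C) x :=
  ex_derive (fun t => Re (z t)) x /\ ex_derive (fun t => Im (z t)) x.

Lemma exdC_sumC n (Z : nat -> R -> C) x :
  (forall j, (j < n)%nat -> exdC (Z j) x) -> exdC (fun t => sumC n (fun j => Z j t)) x.
Proof.
  induction n; intros H; simpl.
  - split; apply exd_const.
  - assert (A := IHn (fun j Hj => H j ltac:(lia))). destruct A as [A1 A2].
    destruct (H n ltac:(lia)) as [B1 B2].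
    split; [exact (exd_plus _ _ x A1 B1) | exact (exd_plus _ _ x A2 B2)].
Qed.

Lemma exdC_mult c (Z : R -> C) x : exdC Z x -> exdC (fun t => Cmult c (Z t)) x.
Proof.
  intros [A B]; split; unfold Cmult, Re, Im in *; simpl.
  - apply exd_minus; apply ex_derive_mult; auto; apply exd_const.
  - apply exd_plus; apply ex_derive_mult; auto; apply exd_const.
Qed.

Lemma exdC_pert (P : Precoder) m0 k0 pz m t x :
  exdC pz x -> exdC (fun y => pertP P m0 k0 (pz y) m t) x.
Proof.
  intros [A B]; unfold pertP. destruct (andb (Nat.eqb m m0) (Nat.eqb t k0)).
  - split; unfold Cplus, Re, Im in *; simpl; apply exd_plus; auto; apply exd_const.
  - split; apply exd_const.
Qed.

Lemma exd_normsq Z x : exdC Z x -> ex_derive (fun t => normsq (Z t)) x.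
Proof.
  intros [A B]; unfold normsq. apply exd_plus; apply ex_derive_pow; auto.
Qed.

Lemma exd_gain M h P m0 k0 pz k i t x : exdC pz x ->
  ex_derive (fun y => gain M h (pertP P m0 k0 (pz y)) k i t) x.
Proof.
  intros Hp; unfold gain. apply exd_normsq.
  apply (exdC_sumC M (fun m y => Cmult (h k i m) (pertP P m0 k0 (pz y) m t))).
  intros; apply exdC_mult, exdC_pert, Hp.
Qed.

Lemma exd_rint M K L h alpha P m0 k0 pz k i l x : exdC pz x ->
  ex_derive (fun y => rint M K L h alpha (pertP P m0 k0 (pz y)) k i l) x.
Proof.
  intros Hp; unfold rint. exd; apply exd_gain; auto.
Qed.

Lemma exd_trPPH M K P m0 k0 pz x : exdC pz x ->
  ex_derive (fun y => trPPH M K (pertP P m0 k0 (pz y))) x.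
Proof.
  intros Hp; unfold trPPH. exd.
  apply (exd_normsq (fun y => pertP P m0 k0 (pz y) _ _)). apply exdC_pert; auto.
Qed.


Lemma sumR_ext n f g : (forall j, (j < n)%nat -> f j = g j) -> sumR n f = sumR n g.
Proof. induction n; intros H; simpl; auto. rewrite IHn, H; auto; intros; apply H; lia. Qed.
Lemma sumR_plus n f g : sumR n (fun j => f j + g j) = sumR n f + sumR n g.
Proof. induction n; simpl; [ring| rewrite IHn; ring]. Qed.
Lemma sumR_scal n c f : sumR n (fun j => c * f j) = c * sumR n f.
Proof. induction n; simpl; [ring| rewrite IHn; ring]. Qed.
Lemma sumR_scal_r n c f : sumR n (fun j => f j * c) = sumR n f * c.
Proof. induction n; simpl; [ring| rewrite IHn; ring]. Qed.
Lemma sumR_const n c : sumR n (fun _ => c) = INR n * c.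
Proof. induction n; simpl sumR; [simpl; ring| rewrite IHn, S_INR; ring]. Qed.
Lemma sumR_nonneg n f : (forall j, (j < n)%nat -> 0 <= f j) -> 0 <= sumR n f.
Proof. induction n; intros H; simpl; [lra|]. assert (0 <= sumR n f) by (apply IHn; intros; apply H; lia).
  assert (0 <= f n) by (apply H; lia). lra. Qed.
Lemma sum_tri_plus L F G : sum_tri L (fun i l => F i l + G i l) = sum_tri L F + sum_tri L G.
Proof. unfold sum_tri. rewrite <- sumR_plus. apply sumR_ext; intros.
  rewrite <- sumR_plus. apply sumR_ext; intros. destruct (Nat.leb j j0); ring. Qed.

Lemma normsq_ge0 z : 0 <= normsq z.
Proof. unfold normsq. nra. Qed.

Lemma rint_ge1 M K L h alpha P k i l :
  (forall j, (j < L)%nat -> 0 <= alpha k j) -> 1 <= rint M K L h alpha P k i l.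
Proof.
  intros Ha; unfold rint.
  assert (0 <= sumR L (fun j => if Nat.ltb l j then alpha k j else 0)).
  { apply sumR_nonneg; intros; destruct (Nat.ltb l j); auto; lra. }
  assert (0 <= sumR K (fun t => if Nat.eqb t k then 0 else gain M h P k i t)).
  { apply sumR_nonneg; intros; destruct (Nat.eqb j k); [lra|apply normsq_ge0]. }
  assert (0 <= gain M h P k i k) by apply normsq_ge0.
  assert (0 <= sumR L (fun j => if Nat.ltb l j then alpha k j else 0) * gain M h P k i k) by nra.
  lra.
Qed.

Lemma exd_rate_gen (G Rr : R -> R) a x : ex_derive G x -> ex_derive Rr x ->
  0 < Rr x -> 0 <= G x -> 0 < a -> ex_derive (fun t => ln (1 + a * G t / Rr t)) x.
Proof.
  intros HG HR Hr Hg Ha. auto_derive. repeat split; auto; try lra.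
  assert (0 <= a * G x / Rr x). { unfold Rdiv. apply Rmult_le_pos; [nra|]. left; apply Rinv_0_lt_compat; auto. }
  lra.
Qed.

Lemma key_D (G Rr : R -> R) psi0 a g0 r0 : ex_derive G 0 -> ex_derive Rr 0 -> G 0 = g0 -> Rr 0 = r0 ->
  0 < a -> 0 <= g0 -> 0 < r0 ->
  is_derive (fun t => psi0 * (/ (/ (/a + g0/r0)) * / (/a + G t / Rr t) - ln (a * / (/ (/a + g0/r0)))
     - (1 - ln (1 + a * G t / Rr t)))) 0 0.
Proof.
  intros HG HR E1 E2 Ha Hg Hr.
  assert (0 <= g0 / r0) by (unfold Rdiv; apply Rmult_le_pos; [lra| left; apply Rinv_0_lt_compat; auto]).
  assert (0 < /a) by (apply Rinv_0_lt_compat; auto).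
  assert (0 <= a * g0 / r0) by (unfold Rdiv; apply Rmult_le_pos; [nra| left; apply Rinv_0_lt_compat; auto]).
  auto_derive.
  - rewrite E1, E2. repeat split; auto; try lra.
  - rewrite E1, E2. assert (0 < r0 + a * g0) by nra. assert (0 < a*r0) by nra.
    field. repeat split; lra.
Qed.


Lemma lagr_rel M K L h alpha Etx b Rth P xi cb mu kappa psi lambda :
 lagr_g M K L h alpha Etx b (fun k l => 1 - Rth k l) P xi cb mu kappa psi lambda =
 lagr_f M K L h alpha Etx Rth P (fun k l => 1 - xi k l) (INR L - cb) mu kappa psi lambda + INR L
 + sumR K (fun k => sum_tri L (fun i l => psi k i l *
      (xi_mmse M K L h alpha b P k i l - (1 - rate M K L h alpha P k i l)))).
Proof.
  unfold lagr_g, lagr_f.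
  rewrite (sumR_scal_r K cb mu), (sumR_scal_r K (INR L - cb) mu).
  assert (E3 : sumR K (fun k => sumR L (fun l => mu k * xi k l)) =
     sumR K mu * INR L - sumR K (fun k => sumR L (fun l => mu k * (1 - xi k l)))).
  { rewrite <- sumR_scal_r. apply Rplus_eq_reg_r with (sumR K (fun k => sumR L (fun l => mu k * (1 - xi k l)))).
    rewrite <- sumR_plus. ring_simplify. apply sumR_ext; intros.
    rewrite <- sumR_plus, Rmult_comm, <- sumR_const. apply sumR_ext; intros; ring. }
  assert (E4 : sumR K (fun k => sumR L (fun l => kappa k l * (xi k l - (1 - Rth k l)))) =
     sumR K (fun k => sumR L (fun l => kappa k l * (Rth k l - (1 - xi k l))))).
  { apply sumR_ext; intros; apply sumR_ext; intros; ring. }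
  assert (E5 : sumR K (fun k => sum_tri L (fun i l => psi k i l * (xi_mmse M K L h alpha b P k i l - xi k l))) =
     sumR K (fun k => sum_tri L (fun i l => psi k i l * (1 - xi k l - rate M K L h alpha P k i l)))
     + sumR K (fun k => sum_tri L (fun i l => psi k i l *
      (xi_mmse M K L h alpha b P k i l - (1 - rate M K L h alpha P k i l))))).
  { rewrite <- sumR_plus. apply sumR_ext; intros. rewrite <- sum_tri_plus.
    unfold sum_tri; apply sumR_ext; intros; apply sumR_ext; intros.
    destruct (Nat.leb j0 j1); ring. }
  rewrite E3, E4, E5. ring.
Qed.

Lemma part1 M K L h alpha Pstar k i l :
  (forall j, (j < L)%nat -> 0 < alpha k j) -> (l <= i)%nat -> (i < L)%nat ->
  xi_mmse M K L h alpha (fun k i l => / eps_mmse M K L h alpha Pstar k i l) Pstar k i l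
  = 1 - rate M K L h alpha Pstar k i l.
Proof.
  intros Ha Hli HiL. unfold xi_mmse, eps_mmse, rate.
  assert (Hr := rint_ge1 M K L h alpha Pstar k i l ltac:(intros; left; auto)).
  assert (Hg := normsq_ge0 (sumC M (fun m => Cmult (h k i m) (Pstar m k)))).
  fold (gain M h Pstar k i k) in Hg.
  set (g := gain M h Pstar k i k) in *. set (r := rint M K L h alpha Pstar k i l) in *.
  assert (Hal : 0 < alpha k l) by (apply Ha; lia).
  assert (0 <= g / r) by (unfold Rdiv; apply Rmult_le_pos; [lra| left; apply Rinv_0_lt_compat; lra]).
  assert (0 < /alpha k l) by (apply Rinv_0_lt_compat; auto).
  rewrite Rinv_inv. rewrite Rinv_r by lra.
  replace (alpha k l * (/ alpha k l + g / r)) with (1 + alpha k l * g / r) by (field; lra).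
  ring.
Qed.


Lemma pertP0 P m k : pertP P m k (0,0) = P.
Proof.
  apply functional_extensionality; intro x; apply functional_extensionality; intro y.
  unfold pertP. destruct (andb _ _); auto. destruct (P x y); unfold Cplus; simpl; f_equal; ring.
Qed.

Lemma is_derive_sumR0 n (F : nat -> R -> R) x :
  (forall j, (j < n)%nat -> is_derive (F j) x 0) ->
  is_derive (fun y => sumR n (fun j => F j y)) x 0.
Proof.
  induction n; intros H; simpl.
  - exact (is_derive_const 0 x).
  - assert (A := is_derive_plus _ _ x 0 0 (IHn (fun j Hj => H j ltac:(lia))) (H n ltac:(lia))).
    simpl in A. unfold plus in A; simpl in A. rewrite Rplus_0_r in A. exact A.
Qed.

Lemma Derive_plus_zero (f d : R -> R) C x : ex_derive f x -> is_derive d x 0 ->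
  Derive (fun t => f t + C + d t) x = Derive f x.
Proof.
  intros Hf Hd. apply is_derive_unique.
  assert (A := is_derive_plus _ _ x _ _ (is_derive_plus _ _ x _ _ (Derive_correct f x Hf) (is_derive_const C x)) Hd).
  unfold plus, zero in A; simpl in A. replace (Derive f x) with (Derive f x + 0 + 0) by ring. exact A.
Qed.

Lemma Derive_refl (f : R -> R) a L0 x : ex_derive f (a - x) ->
  Derive (fun y => f (a - y) + L0) x = - Derive f (a - x).
Proof.
  intros Hf. apply is_derive_unique. auto_derive; auto. change (fun x0 : R => f x0) with f. unfold Rminus. ring.
Qed.


Lemma F_exd_c M K L h alpha Etx Rth P R mu kappa psi lambda x :
  ex_derive (fun c' => lagr_f M K L h alpha Etx Rth P R c' mu kappa psi lambda) x.
Proof. unfold lagr_f, sum_tri. exd. Qed.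

Lemma F_exd_R M K L h alpha Etx Rth P R c mu kappa psi lambda k l x :
  ex_derive (fun y => lagr_f M K L h alpha Etx Rth P (upd2 R k l y) c mu kappa psi lambda) x.
Proof. unfold lagr_f, sum_tri, upd2. exd. Qed.

Lemma F_exd_P M K L h alpha Etx Rth Pstar R c mu kappa psi lambda m0 k0 pz
  (Halpha_pos : forall k l, (k < K)%nat -> (l < L)%nat -> 0 < alpha k l) :
  exdC pz 0 ->
  ex_derive (fun t => lagr_f M K L h alpha Etx Rth (pertP Pstar m0 k0 (pz t)) R c mu kappa psi lambda) 0.
Proof.
  intros Hp. unfold lagr_f, sum_tri. exd.
  - apply exd_trPPH; auto.
  - unfold rate. apply exd_rate_gen.
    + apply exd_gain; auto.
    + apply exd_rint; auto.
    + apply (Rlt_le_trans _ 1); [lra|]. apply rint_ge1; intros; left; apply Halpha_pos; auto.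
    + unfold gain; apply normsq_ge0.
    + apply Halpha_pos; auto.
Qed.

Lemma D_deriv M K L h alpha Pstar psi m0 k0 pz
  (Halpha_pos : forall k l, (k < K)%nat -> (l < L)%nat -> 0 < alpha k l) :
  exdC pz 0 -> pz 0 = (0,0) ->
  is_derive (fun t => sumR K (fun k => sum_tri L (fun i l => psi k i l *
      (xi_mmse M K L h alpha (fun k i l => / eps_mmse M K L h alpha Pstar k i l) (pertP Pstar m0 k0 (pz t)) k i l
       - (1 - rate M K L h alpha (pertP Pstar m0 k0 (pz t)) k i l))))) 0 0.
Proof.
  intros Hp Hp0. apply is_derive_sumR0; intros k Hk. unfold sum_tri.
  apply is_derive_sumR0; intros l Hl. apply is_derive_sumR0; intros i Hi.
  destruct (Nat.leb l i); [| exact (is_derive_const 0 0)].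
  unfold xi_mmse, eps_mmse, rate.
  apply (key_D (fun t => gain M h (pertP Pstar m0 k0 (pz t)) k i k)
               (fun t => rint M K L h alpha (pertP Pstar m0 k0 (pz t)) k i l)).
  - apply exd_gain; auto.
  - apply exd_rint; auto.
  - simpl. rewrite Hp0, pertP0. reflexivity.
  - simpl. rewrite Hp0, pertP0. reflexivity.
  - apply Halpha_pos; auto.
  - unfold gain; apply normsq_ge0.
  - apply (Rlt_le_trans _ 1); [lra|]. apply rint_ge1; intros; left; apply Halpha_pos; auto.
Qed.


Lemma sumR_one_minus n (f : nat -> R) : sumR n (fun l => 1 - f l) = INR n - sumR n f.
Proof. induction n; simpl sumR; [simpl; ring| rewrite IHn, S_INR; ring]. Qed.

Theorem mainTheorem1
  (M K L : nat) (h : Chan) (alpha : nat -> nat -> R) (Etx : R)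
  (Rth : nat -> nat -> R) (Pstar : Precoder)
  (Halpha_pos : forall k l, (k < K)%nat -> (l < L)%nat -> 0 < alpha k l)
  (Halpha_sum : forall k, (k < K)%nat -> sumR L (fun l => alpha k l) = 1)
  (HEtx : 0 < Etx)
  (HRth : forall k l, (k < K)%nat -> (l < L)%nat -> 0 <= Rth k l) :
  let b := fun k i l => / eps_mmse M K L h alpha Pstar k i l in
  let xith := fun k l => 1 - Rth k l in
  (forall k i l, (k < K)%nat -> (l <= i)%nat -> (i < L)%nat ->
     xi_mmse M K L h alpha b Pstar k i l = 1 - rate M K L h alpha Pstar k i l) /\
  (forall (Rstar : nat -> nat -> R) (cstar : R) (mu : nat -> R)
          (kappa : nat -> nat -> R) (psi : nat -> nat -> nat -> R) (lambda : R),
     KKT1 M K L h alpha Etx Rth Pstar Rstar cstar mu kappa psi lambda <->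
     KKT2 M K L h alpha Etx b xith Pstar (fun k l => 1 - Rstar k l) (INR L - cstar)
          mu kappa psi lambda).
Proof.
  cbv zeta.
  assert (P1 : forall k i l, (k < K)%nat -> (l <= i)%nat -> (i < L)%nat ->
     xi_mmse M K L h alpha (fun k i l => / eps_mmse M K L h alpha Pstar k i l) Pstar k i l
     = 1 - rate M K L h alpha Pstar k i l).
  { intros; apply part1; auto. }
  split; [exact P1|].
  intros R c mu kappa psi lambda.
  set (b := fun k i l => / eps_mmse M K L h alpha Pstar k i l) in *.
  set (Dsum := fun P' => sumR K (fun k => sum_tri L (fun i l => psi k i l *
      (xi_mmse M K L h alpha b P' k i l - (1 - rate M K L h alpha P' k i l))))).
  assert (REL : forall P', lagr_g M K L h alpha Etx b (fun k l => 1 - Rth k l) P'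
       (fun k l => 1 - R k l) (INR L - c) mu kappa psi lambda =
       lagr_f M K L h alpha Etx Rth P' R c mu kappa psi lambda + INR L + Dsum P').
  { intros P'. rewrite lagr_rel.
    replace (INR L - (INR L - c)) with c by ring.
    replace (fun k l => 1 - (1 - R k l)) with R; [reflexivity|].
    apply functional_extensionality; intro; apply functional_extensionality; intro; ring. }
  assert (D0 : Dsum Pstar = 0).
  { unfold Dsum. rewrite (sumR_ext K _ (fun _ => 0)). rewrite sumR_const; ring.
    intros k Hk. unfold sum_tri. rewrite (sumR_ext L _ (fun _ => 0)). rewrite sumR_const; ring.
    intros l Hl. rewrite (sumR_ext L _ (fun _ => 0)). rewrite sumR_const; ring.
    intros i Hi. destruct (Nat.leb l i) eqn:E; [|reflexivity].
    apply Nat.leb_le in E. rewrite P1; auto. ring. }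
  assert (DIR : forall pz m k, exdC pz 0 -> pz 0 = (0,0) ->
    Derive (fun t => lagr_g M K L h alpha Etx b (fun k l => 1 - Rth k l) (pertP Pstar m k (pz t))
       (fun k l => 1 - R k l) (INR L - c) mu kappa psi lambda) 0 =
    Derive (fun t => lagr_f M K L h alpha Etx Rth (pertP Pstar m k (pz t)) R c mu kappa psi lambda) 0).
  { intros pz m k Hp Hp0. rewrite (Derive_ext _ (fun t =>
        lagr_f M K L h alpha Etx Rth (pertP Pstar m k (pz t)) R c mu kappa psi lambda + INR L
        + Dsum (pertP Pstar m k (pz t)))) by (intros; apply REL).
    apply Derive_plus_zero.
    - apply F_exd_P; auto.
    - apply D_deriv; auto. }
  assert (S1 : forall m k, dconj (fun P' => lagr_g M K L h alpha Etx b (fun k l => 1 - Rth k l) P'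
       (fun k l => 1 - R k l) (INR L - c) mu kappa psi lambda) Pstar m k =
     dconj (fun P' => lagr_f M K L h alpha Etx Rth P' R c mu kappa psi lambda) Pstar m k).
  { intros m k. unfold dconj.
    assert (E1 := DIR (fun t => (t,0)) m k). assert (E2 := DIR (fun t => (0,t)) m k).
    cbv beta in E1, E2. rewrite E1, E2; auto.
    - split; [exact (exd_const 0 0) | exact (exd_id 0)].
    - split; [exact (exd_id 0) | exact (exd_const 0 0)]. }
  assert (S2 : Derive (fun c' => lagr_g M K L h alpha Etx b (fun k l => 1 - Rth k l) Pstar
       (fun k l => 1 - R k l) c' mu kappa psi lambda) (INR L - c) =
     - Derive (fun c' => lagr_f M K L h alpha Etx Rth Pstar R c' mu kappa psi lambda) c).
  { rewrite (Derive_ext _ (fun c' => lagr_f M K L h alpha Etx Rth Pstar R (INR L - c') mu kappa psi lambda + INR L)).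
    - rewrite (Derive_refl (fun c' => lagr_f M K L h alpha Etx Rth Pstar R c' mu kappa psi lambda)).
      replace (INR L - (INR L - c)) with c by ring. reflexivity.
      apply F_exd_c.
    - intros t. rewrite lagr_rel. fold (Dsum Pstar). rewrite D0, Rplus_0_r.
      replace (fun k l => 1 - (1 - R k l)) with R; [reflexivity|].
      apply functional_extensionality; intro; apply functional_extensionality; intro; ring. }
  assert (S3 : forall k l, Derive (fun x => lagr_g M K L h alpha Etx b (fun k l => 1 - Rth k l) Pstar
       (upd2 (fun k l => 1 - R k l) k l x) (INR L - c) mu kappa psi lambda) (1 - R k l) =
     - Derive (fun x => lagr_f M K L h alpha Etx Rth Pstar (upd2 R k l x) c mu kappa psi lambda) (R k l)).
  { intros k l.
    rewrite (Derive_ext _ (fun x => lagr_f M K L h alpha Etx Rth Pstar (upd2 R k l (1 - x)) c mu kappa psi lambda + INR L)).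
    - rewrite (Derive_refl (fun x => lagr_f M K L h alpha Etx Rth Pstar (upd2 R k l x) c mu kappa psi lambda)).
      replace (1 - (1 - R k l)) with (R k l) by ring. reflexivity.
      apply F_exd_R.
    - intros t. rewrite lagr_rel. fold (Dsum Pstar). rewrite D0, Rplus_0_r.
      replace (INR L - (INR L - c)) with c by ring.
      replace (fun k0 l0 => 1 - upd2 (fun k1 l1 => 1 - R k1 l1) k l t k0 l0) with (upd2 R k l (1 - t));
        [reflexivity|].
      apply functional_extensionality; intro; apply functional_extensionality; intro.
      unfold upd2. destruct (andb _ _); ring. }
  unfold KKT1, KKT2. cbv zeta beta.
  split.
  - intros (H1 & H2 & H3 & H4 & H5 & H6 & H7 & H8 & H9 & H10 & H11 & H12 & H13 & H14 & H15).
    repeat split; auto.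
    + intros m k Hm Hk. rewrite S1; auto.
    + rewrite S2, H2; ring.
    + intros k l Hk Hl. rewrite S3, H3; auto; ring.
    + intros k Hk. rewrite (sumR_one_minus L (fun l => R k l)). specialize (H4 k Hk). lra.
    + intros k i l Hk Hli HiL. rewrite P1; auto. specialize (H5 k i l Hk Hli HiL). lra.
    + intros k l Hk Hl. specialize (H6 k l Hk Hl). lra.
    + intros k Hk. rewrite (sumR_one_minus L (fun l => R k l)). rewrite <- (H12 k Hk). ring.
    + intros k i l Hk Hli HiL. rewrite P1; auto. rewrite <- (H13 k i l Hk Hli HiL). ring.
    + intros k l Hk Hl. rewrite <- (H14 k l Hk Hl). ring.
  - intros (H1 & H2 & H3 & H4 & H5 & H6 & H7 & H8 & H9 & H10 & H11 & H12 & H13 & H14 & H15).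
    repeat split; auto.
    + intros m k Hm Hk. rewrite <- S1; auto.
    + rewrite S2 in H2; lra.
    + intros k l Hk Hl. specialize (H3 k l Hk Hl). rewrite S3 in H3; lra.
    + intros k Hk. specialize (H4 k Hk). rewrite (sumR_one_minus L (fun l => R k l)) in H4. lra.
    + intros k i l Hk Hli HiL. specialize (H5 k i l Hk Hli HiL). rewrite P1 in H5; auto. lra.
    + intros k l Hk Hl. specialize (H6 k l Hk Hl). lra.
    + intros k Hk. specialize (H12 k Hk). rewrite (sumR_one_minus L (fun l => R k l)) in H12. rewrite <- H12. ring.
    + intros k i l Hk Hli HiL. specialize (H13 k i l Hk Hli HiL). rewrite P1 in H13; auto. rewrite <- H13. ring.
    + intros k l Hk Hl. rewrite <- (H14 k l Hk Hl). ring.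
Qed.
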